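(* Fix matrices $A\in\mathbb{R}^{n_s\times n_s}$, $B\in\mathbb{R}^{n_s\times n_a}$, a vector $\mathbf b\in\mathbb{R}^{n_s}$ and an integer $q\ge 1$. Let $\mathcal{D}=\{(\mathbf s_k,\mathbf a_k,\mathbf s_{k+1})\}_{k=1}^{n}$ be a finite set of observed state transitions with $\mathbf s_k,\mathbf s_{k+1}\in\mathbb{R}^{n_s}$, $\mathbf a_k\in\mathbb{R}^{n_a}$. For a transition $(\mathbf s,\mathbf a,\mathbf s_+)$ define its noise $\mathbf w:=\mathbf s_+-(A\mathbf s+B\mathbf a+\mathbf b)$, and for any subset $\hat{\mathcal D}\subseteq\mathcal D$ let $\mathcal{W}(\hat{\mathcal D})$ be the set of noises of its transitions and $$\mathcal{S}_{\hat{\mathcal D}}:=\{\theta=(M,\mathbf m)\in\mathbb{R}^{q\times n_s}\times\mathbb{R}^q\ :\ M\mathbf w\le\mathbf m\ \ \forall\,\mathbf w\in\mathcal{W}(\hat{\mathcal D})\}.$$ Call $\bar{\mathcal D}\subseteq\mathcal D$ an optimal data compression if $\mathcal{S}_{\bar{\mathcal D}}=\mathcal{S}_{\mathcal D}$ and $|\bar{\mathcal D}|=\min\{|\hat{\mathcal D}|:\hat{\mathcal D}\subseteq\mathcal D,\ \mathcal{S}_{\hat{\mathcal D}}=\mathcal{S}_{\mathcal D}\}$. Let $\bar{\mathcal D}\subseteq\mathcal D$ consist of exactly one transition for each vertex (extreme point) of the convex hull $\mathrm{Conv}(\mathcal{W}(\mathcal D))$, namely a transition whose noise equals that vertex (so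 that $\mathcal W(\bar{\mathcal D})$ is the vertex representation of $\mathrm{Conv}(\mathcal W(\mathcal D))$). Then $\bar{\mathcal D}$ is an optimal data compression.
   Context: This formalizes the paper's statement that, for the polytopic dispersion-set parametrization $\hat{\mathbf S}_+(\mathbf s,\mathbf a,\theta)=\{A\mathbf s+B\mathbf a+\mathbf b+\mathbf w: M\mathbf w\le\mathbf m\}$ with fixed nominal model $(A,B,\mathbf b)$, the convex hull (in vertex representation) of the observed noise samples is an optimal data compression, i.e., a minimum-cardinality subset of the data defining the same set $\mathcal S$ of admissible parameters $\theta=(M,\mathbf m)$ (the ''safe design constraint'' set). *)

(* Defs.v *)
From HB Require Import structures.
From mathcomp Require Import all_boot all_order all_algebra.
From mathcomp Require Import finmap.
From mathcomp Require Import reals.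
Set Implicit Arguments. Unset Strict Implicit. Unset Printing Implicit Defensive.
Import Order.TTheory GRing.Theory Num.Theory.
Local Open Scope ring_scope.
Local Open Scope fset_scope.

Definition transition (R : realType) (ns na : nat) : Type :=
  ('cV[R]_ns * 'cV[R]_na * 'cV[R]_ns)%type.

Definition noise (R : realType) (ns na : nat)
  (A : 'M[R]_ns) (B : 'M[R]_(ns, na)) (b : 'cV[R]_ns)
  (t : transition R ns na) : 'cV[R]_ns :=
  t.2 - (A *m t.1.1 + B *m t.1.2 + b).

Definition Wset (R : realType) (ns na : nat)
  (A : 'M[R]_ns) (B : 'M[R]_(ns, na)) (b : 'cV[R]_ns)
  (Dh : {fset transition R ns na}) : {fset 'cV[R]_ns} :=
  [fset noise A B b t | t in Dh].

Definition in_S (R : realType) (ns na q : nat)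
  (A : 'M[R]_ns) (B : 'M[R]_(ns, na)) (b : 'cV[R]_ns)
  (Dh : {fset transition R ns na}) (theta : 'M[R]_(q, ns) * 'cV[R]_q) : Prop :=
  forall w, w \in Wset A B b Dh -> forall i : 'I_q, (theta.1 *m w) i 0 <= theta.2 i 0.

Definition same_S (R : realType) (ns na q : nat)
  (A : 'M[R]_ns) (B : 'M[R]_(ns, na)) (b : 'cV[R]_ns)
  (D1 D2 : {fset transition R ns na}) : Prop :=
  forall theta : 'M[R]_(q, ns) * 'cV[R]_q,
    in_S A B b D1 theta <-> in_S A B b D2 theta.

Definition in_conv (R : realType) (ns : nat) (W : {fset 'cV[R]_ns}) (x : 'cV[R]_ns) : Prop :=
  exists lam : 'cV[R]_ns -> R,
    (forall w, w \in W -> 0 <= lam w) /\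
    \sum_(w <- W) lam w = 1 /\
    x = \sum_(w <- W) lam w *: w.

Definition is_vertex (R : realType) (ns : nat) (W : {fset 'cV[R]_ns}) (x : 'cV[R]_ns) : Prop :=
  in_conv W x /\
  forall (y z : 'cV[R]_ns) (t : R), in_conv W y -> in_conv W z ->
    0 < t < 1 -> x = (t *: y + (1 - t) *: z)%R -> y = x /\ z = x.

Definition optimal_compression (R : realType) (ns na q : nat)
  (A : 'M[R]_ns) (B : 'M[R]_(ns, na)) (b : 'cV[R]_ns)
  (D Dbar : {fset transition R ns na}) : Prop :=
  Dbar `<=` D /\ same_S q A B b Dbar D /\
  forall Dh : {fset transition R ns na},
    Dh `<=` D -> same_S q A B b Dh D -> (#|` Dbar| <= #|` Dh|)%N.

(* Main.v *)
From HB Require Import structures.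
From mathcomp Require Import all_boot all_order all_algebra.
From mathcomp Require Import finmap.
From mathcomp Require Import reals.
From mathcomp Require Import ring lra.
Require Import Defs.
Set Implicit Arguments. Unset Strict Implicit. Unset Printing Implicit Defensive.
Import Order.TTheory GRing.Theory Num.Theory.
Local Open Scope ring_scope.



Section Farkas.
Variable R : realFieldType.
Variables V Y : lmodType R.
Variable d : Y -> V -> R.
Hypothesis dl : forall a y z x, d (a *: y + z) x = a * d y x + d z x.
Hypothesis dr : forall a y x z, d y (a *: x + z) = a * d y x + d y z.
Hypothesis dbase : forall b, b != 0 -> exists y, d y b < 0.

Fixpoint incone (s : seq V) (b : V) : Prop :=
  match s with
  | [::] => b = 0
  | a :: s' => exists c, 0 <= c /\ incone s' (b - c *: a)
  end.

Lemma dr_lin a c y x z : d y (a *: x - c *: z) = a * d y x - c * d y z.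
Proof.
have h0 : d y 0 = 0.
  have := dr 1 y 0 0; rewrite scale1r addr0 mul1r => H; lra.
have hN : forall w, d y (- w) = - d y w.
  move=> w; have := dr 1 y w (- w); rewrite scale1r subrr h0 mul1r => H; lra.
have := dr c y z 0; rewrite addr0 h0 addr0 => hZ.
by rewrite dr hN hZ.
Qed.

Lemma dl_lin a c y z x : d (a *: y - c *: z) x = a * d y x - c * d z x.
Proof.
have h0 : d 0 x = 0.
  have := dl 1 0 0 x; rewrite scale1r addr0 mul1r => H; lra.
have hN : forall w, d (- w) x = - d w x.
  move=> w; have := dl 1 w (- w) x; rewrite scale1r subrr h0 mul1r => H; lra.
have := dl c z 0 x; rewrite addr0 h0 addr0 => hZ.
by rewrite dl hN hZ.
Qed.

Lemma incone_map (y' : Y) (a : V) (s : seq V) x :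
  let al := d y' a in
  (forall ai, ai \in s -> 0 <= d y' ai) ->
  incone (map (fun ai => al *: ai - d y' ai *: a) s) x ->
  exists z, incone s z /\ exists2 e, 0 <= e & x = al *: z - e *: a.
Proof.
move=> al; elim: s x => [|ai s IH] x /= hs.
  move=> ->; exists 0; split => //; exists 0 => //; by rewrite !scaler0 scale0r subr0.
case=> c [hc hi].
have [z [hz [e he hx]]] := IH _ (fun w hw => hs w (@mem_behead _ (ai :: s) _ hw)) hi.
exists (z + c *: ai); split.
  exists c; split => //; by rewrite addrK.
have hai := hs ai (mem_head _ _).
exists (e + c * d y' ai); first by apply: addr_ge0 => //; apply: mulr_ge0.
have hx' : x = al *: z - e *: a + c *: (al *: ai - d y' ai *: a) by rewrite -hx subrK.
rewrite hx' !scalerDr !scalerDl !scalerN !scalerA (mulrC c al) opprD.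
by rewrite -!addrA; congr (_ + _); rewrite addrCA.
Qed.

Theorem farkas n : forall (s : seq V) b, size s = n -> ~ incone s b ->
  exists y, (forall a, a \in s -> 0 <= d y a) /\ d y b < 0.
Proof.
elim: n => [|n IH] s b.
  case: s => //= _ hb; have /dbase [y hy] : b != 0 by apply/eqP.
  by exists y; split.
case: s => //= a s [hsz] hn.
have hn' : ~ incone s b.
  by move=> h; apply: hn; exists 0; split => //; rewrite scale0r subr0.
have [y' [hy's hy'b]] := IH _ _ hsz hn'.
have [ha|ha] := leP 0 (d y' a).
  exists y'; split => // w; rewrite inE => /orP [/eqP -> //|]; exact: hy's.
set al := d y' a.
set s'' := map (fun ai => al *: ai - d y' ai *: a) s.
set b'' := al *: b - d y' b *: a.
have hn'' : ~ incone s'' b''.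
  move=> /(incone_map hy's) [z [hz [e he hx]]].
  apply: hn; exists ((d y' b - e) / al); split.
    apply: mulr_le0; [lra | rewrite invr_le0 /al; lra].
  suff -> : b - (d y' b - e) / al *: a = z by [].
  have hal : al != 0 by rewrite /al; apply/eqP; lra.
  apply: (scalerI hal); rewrite scalerBr scalerA mulrC divfK //.
  have hzz : al *: z = b'' + e *: a by rewrite hx subrK.
  by rewrite hzz /b'' scalerBl opprB addrA addrAC.
have hsz'' : size s'' = n by rewrite size_map.
have [y'' [hy''s hy''b]] := IH _ _ hsz'' hn''.
exists (al *: y'' - d y'' a *: y'); split.
  move=> w; rewrite inE => /orP [/eqP ->|hw].
    rewrite (dl_lin al (d y'' a) y'' y' a).
    by rewrite /al mulrC subrr.
  rewrite (dl_lin al (d y'' a) y'' y' w) (mulrC (d y'' a)) -dr_lin; apply: hy''s.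
  by apply/mapP; exists w.
by rewrite (dl_lin al (d y'' a) y'' y' b) (mulrC (d y'' a)) -dr_lin.
Qed.
End Farkas.

Section Conv.
Variable R : realType.
Variable n : nat.
Implicit Types (s : seq 'cV[R]_n) (u : 'rV[R]_n) (x y z w : 'cV[R]_n).

Definition f u w : R := (u *m w) 0 0.

Definition convs s x := exists lam : 'cV[R]_n -> R,
    (forall w, w \in s -> 0 <= lam w) /\
    \sum_(w <- s) lam w = 1 /\
    x = \sum_(w <- s) lam w *: w.

Lemma f_sum u s (lam : 'cV[R]_n -> R) :
  f u (\sum_(w <- s) lam w *: w) = \sum_(w <- s) lam w * f u w.
Proof.
rewrite /f mulmx_sumr summxE; apply: eq_bigr => w _.
by rewrite -scalemxAr mxE.
Qed.

Lemma f_comb u t y z : f u (t *: y + (1 - t) *: z) = t * f u y + (1 - t) * f u z.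
Proof. by rewrite /f mulmxDr -!scalemxAr !mxE. Qed.

Lemma conv_le s u c y : convs s y -> (forall w, w \in s -> f u w <= c) -> f u y <= c.
Proof.
move=> [lam [h0 [h1 ->]]] hc; rewrite f_sum.
have -> : c = \sum_(w <- s) lam w * c by rewrite -mulr_suml h1 mul1r.
rewrite big_seq [X in _ <= X]big_seq; apply: ler_sum => w hw.
by apply: ler_wpM2l; [apply: h0 | apply: hc].
Qed.

Lemma psum_seq_eq0 (T : eqType) (r : seq T) (F : T -> R) :
  (forall i, i \in r -> 0 <= F i) -> \sum_(i <- r) F i = 0 ->
  forall i, i \in r -> F i = 0.
Proof.
elim: r => [|a r IH] //= hF; rewrite big_cons => hs i.
have ha := hF a (mem_head _ _).
have hr : forall i, i \in r -> 0 <= F i by move=> j hj; apply: hF; rewrite inE hj orbT.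
have hsr : 0 <= \sum_(j <- r) F j by rewrite big_seq; apply: sumr_ge0.
move: hs => /eqP; rewrite paddr_eq0 // => /andP [/eqP hFa /eqP hsum].
rewrite inE => /orP [/eqP -> //|]; exact: IH.
Qed.

Lemma conv_restrict s u c y (P : pred 'cV[R]_n) :
  convs s y -> (forall w, w \in s -> f u w <= c) -> f u y = c ->
  (forall w, w \in s -> f u w = c -> P w) -> convs (filter P s) y.
Proof.
move=> [lam [h0 [h1 hy]]] hc hfy hP.
have hsum : \sum_(w <- s) lam w * (c - f u w) = 0.
  under eq_bigr do rewrite mulrBr.
  by rewrite sumrB -mulr_suml h1 mul1r -f_sum -hy hfy subrr.
have hnn : forall w, w \in s -> 0 <= lam w * (c - f u w).
  by move=> w hw; apply: mulr_ge0; [exact: h0 | rewrite subr_ge0; exact: hc].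
have hz := psum_seq_eq0 hnn hsum.
have hl : forall w, w \in s -> ~~ P w -> lam w = 0.
  move=> w hw hPw; have /eqP := hz w hw; rewrite mulf_eq0 => /orP [/eqP //|].
  rewrite subr_eq0 => /eqP hcw; by rewrite hP // in hPw.
exists lam; split.
  by move=> w; rewrite mem_filter => /andP [_ /h0].
rewrite !big_filter big_mkcond [in X in _ /\ X]big_mkcond /=; split.
  rewrite -h1 big_seq [in RHS]big_seq; apply: eq_bigr => w hw.
  by case: ifP => // /negbT hPw; rewrite hl.
rewrite hy big_seq [in RHS]big_seq; apply: eq_bigr => w hw.
by case: ifP => // /negbT hPw; rewrite hl // scale0r.
Qed.

Lemma conv_single s x y : (forall w, w \in s -> w = x) -> convs s y -> y = x.
Proof.
move=> hs [lam [h0 [h1 ->]]].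
rewrite big_seq (eq_bigr (fun w => lam w *: x)); last by move=> w /hs ->.
by rewrite -big_seq -scaler_suml h1 scale1r.
Qed.

Fixpoint filt (us : seq 'rV[R]_n) s :=
  match us with
  | [::] => s
  | u :: us' => filt us' [seq w <- s | all (fun w' => f u w' <= f u w) s]
  end.

Lemma filt_sub us s : {subset filt us s <= s}.
Proof.
elim: us s => [|u us IH] s //= w /IH; by rewrite mem_filter => /andP [].
Qed.

Lemma exists_max u s : s != [::] -> exists2 w, w \in s & all (fun w' => f u w' <= f u w) s.
Proof.
elim: s => [|a s IH] // _.
case hs: (s == [::]).
  by move/eqP: hs => ->; exists a; rewrite ?mem_head //= lexx.
have [w0 hw0 hall] := IH (negbT hs).
have [hle|hlt] := leP (f u a) (f u w0).
  by exists w0; rewrite /= ?inE ?hw0 ?orbT // hle hall.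
exists a; rewrite ?mem_head //= lexx /=; apply/allP => w' hw'.
by apply: le_trans (ltW hlt); move/allP: hall; apply.
Qed.

Lemma filt_nonempty us s : s != [::] -> filt us s != [::].
Proof.
elim: us s => [|u us IH] s //= hs; apply: IH.
have [w hw hall] := exists_max u hs.
rewrite -has_filter; apply/hasP; by exists w.
Qed.

Lemma filt_eq us s w w' : w \in filt us s -> w' \in filt us s ->
  forall u, u \in us -> f u w = f u w'.
Proof.
elim: us s => [|u0 us IH] s //= hw hw' u; rewrite inE => /orP [/eqP ->|hu]; last first.
  exact: IH hw hw' u hu.
move: (filt_sub hw) (filt_sub hw'); rewrite !mem_filter => /andP [h1 h1s] /andP [h2 h2s].
apply: le_anti; apply/andP; split.
  by move/allP: h2; apply.
by move/allP: h1; apply.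
Qed.

Lemma filt_conv us s x y z t : x \in filt us s -> convs s y -> convs s z ->
  0 < t < 1 -> x = t *: y + (1 - t) *: z ->
  convs (filt us s) y /\ convs (filt us s) z.
Proof.
elim: us s => [|u us IH] s //= hx hy hz ht hxe.
set s' := [seq w <- s | _].
suff [hy' hz'] : convs s' y /\ convs s' z by exact: IH hx hy' hz' ht hxe.
  move: (filt_sub hx); rewrite mem_filter => /andP [hall hxs].
  have hc : forall w, w \in s -> f u w <= f u x by move=> w; move/allP: hall; apply.
  have hfy := conv_le hy hc; have hfz := conv_le hz hc.
  have hfx : f u x = t * f u y + (1 - t) * f u z by rewrite hxe f_comb.
  case/andP: ht => ht0 ht1.
  have e1 : 0 <= t * (f u x - f u y) by apply: mulr_ge0; [lra | lra].
  have e2 : 0 <= (1 - t) * (f u x - f u z) by apply: mulr_ge0; [lra | lra].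
  have e3 : t * (f u x - f u y) + (1 - t) * (f u x - f u z) = 0.
    rewrite !mulrBr hfx; ring.
  have ey : t * (f u x - f u y) = 0 by lra.
  have ez : (1 - t) * (f u x - f u z) = 0 by lra.
  have hP : forall w, w \in s -> f u w = f u x -> all (fun w' => f u w' <= f u w) s.
    by move=> w hw ->.
  split.
    apply: (conv_restrict hy hc) => //.
    by move/eqP: ey; rewrite mulf_eq0 !subr_eq0 => /orP [/eqP ?|/eqP ->]; [lra|].
  apply: (conv_restrict hz hc) => //.
  by move/eqP: ez; rewrite mulf_eq0 !subr_eq0 => /orP [/eqP ?|/eqP ->]; [lra|].
Qed.

Lemma sum_ind_s (T : eqType) (s : seq T) (a : T) (G : T -> R) : uniq s -> a \in s ->
  \sum_(w <- s) (w == a)%:R * G w = G a.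
Proof.
move=> us xs; rewrite (big_rem a) //= eqxx mul1r big1_seq ?addr0 // => w /andP [_ hw].
move: hw; rewrite (mem_rem_uniq _ us) inE => /andP [/negbTE -> _].
by rewrite mul0r.
Qed.

Lemma sum_ind_v (T : eqType) (s : seq T) (a : T) (G : T -> 'cV[R]_n) : uniq s -> a \in s ->
  \sum_(w <- s) (w == a)%:R *: G w = G a.
Proof.
move=> us xs; rewrite (big_rem a) //= eqxx scale1r big1_seq ?addr0 // => w /andP [_ hw].
move: hw; rewrite (mem_rem_uniq _ us) inE => /andP [/negbTE -> _].
by rewrite scale0r.
Qed.

Lemma in_conv_point (W : {fset 'cV[R]_n}) x : x \in W -> in_conv W x.
Proof.
move=> xW; exists (fun w => (w == x)%:R); split; first by move=> w _; apply: ler0n.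
split.
  rewrite -[RHS](sum_ind_s (fun _ => (1:R)) (fset_uniq W) xW).
  by apply: eq_bigr => w _; rewrite mulr1.
by rewrite (sum_ind_v id (fset_uniq W) xW).
Qed.

Definition cs : seq 'rV[R]_n := [seq 'e_j | j <- enum 'I_n].

Lemma f_coord j w : f 'e_j w = w j 0.
Proof. by rewrite /f -rowE mxE. Qed.

Lemma exists_vertex (W : {fset 'cV[R]_n}) u w0 : w0 \in W ->
  exists2 x, x \in W & f u w0 <= f u x /\ is_vertex W x.
Proof.
move=> w0W.
have w0s : w0 \in (W : seq _) by [].
have hne : (W : seq _) != [::] by apply/eqP => hW; rewrite hW in w0s.
have := filt_nonempty (u :: cs) hne.
case hF: (filt (u :: cs) W) => [|x r] // _.
have hx : x \in filt (u :: cs) W by rewrite hF mem_head.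
have hxs' : x \in [seq w <- (W : seq _) | all (fun w' => f u w' <= f u w) W] := @filt_sub cs _ x hx.
have hxW : x \in W by move: hxs'; rewrite mem_filter => /andP [].
exists x => //; split.
  by move: hxs'; rewrite mem_filter => /andP [/allP /(_ w0 w0s)].
split; first exact: in_conv_point.
move=> y z t hy hz ht hxe.
have [cy cz] := filt_conv hx hy hz ht hxe.
have hall : forall w, w \in filt (u :: cs) W -> w = x.
  move=> w hw; apply/matrixP => i j; rewrite (ord1 j).
  rewrite -!f_coord; apply: (filt_eq hw hx).
  by rewrite inE; apply/orP; right; apply/mapP; exists i; rewrite ?mem_enum.
by split; apply: conv_single hall _.
Qed.


Lemma conv_mono (P W : {fset 'cV[R]_n}) z : (P `<=` W)%fset -> convs P z -> in_conv W z.
Proof.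
move=> hPW [lam [h0 [h1 hz]]].
exists (fun w => if w \in P then lam w else 0); split.
  by move=> w _; case: ifP => // /h0.
split.
  rewrite -(big_fset_incl _ hPW); last by move=> w _ /negbTE ->.
  by rewrite -h1 big_seq [RHS]big_seq; apply: eq_bigr => w hw; rewrite hw.
rewrite -(big_fset_incl _ hPW); last by move=> w _ /negbTE ->; rewrite scale0r.
by rewrite hz big_seq [RHS]big_seq; apply: eq_bigr => w hw; rewrite hw.
Qed.

Lemma vertex_not_conv (W P : {fset 'cV[R]_n}) v (lam : 'cV[R]_n -> R) :
  is_vertex W v -> (P `<=` W)%fset -> v \notin P -> (forall p, 0 <= lam p) ->
  \sum_(p <- P) lam p = 1 -> v = \sum_(p <- P) lam p *: p -> False.
Proof.
move=> [_ hv] hPW vP h0 h1 hve.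
have [p0 p0P hp0] : exists2 p0, p0 \in (P : seq _) & 0 < lam p0.
  case: (boolP (has (fun p => 0 < lam p) P)) => [/hasP //| /hasPn hn].
  have : \sum_(p <- P) lam p = 0.
    rewrite big_seq; apply: big1 => p /hn; rewrite -leNgt => hle.
    by apply: le_anti; rewrite hle h0.
  by rewrite h1 => /eqP; rewrite oner_eq0.
set t := lam p0.
have ht1 : t <= 1.
  rewrite -h1 (big_rem p0) //= -[X in X <= _]addr0 lerD2l.
  by rewrite big_seq; apply: sumr_ge0 => p _; apply: h0.
set k := (1 - t / 2)^-1.
have hk0 : 0 < 1 - t / 2 by lra.
set mu := fun p => (lam p - t / 2 * (p == p0)%:R) * k.
have hmu : forall p, 0 <= mu p.
  move=> p; rewrite /mu; apply: mulr_ge0; last by rewrite invr_ge0 ltW.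
  case: (p =P p0) => [->|_]; rewrite /t /=; [lra|have := h0 p; lra].
have hsum_ind := sum_ind_s (fun _ => (1:R)) (fset_uniq P) p0P.
have hvec_ind := sum_ind_v id (fset_uniq P) p0P.
set z := \sum_(p <- P) mu p *: p.
have hz : convs P z.
  exists mu; split; first by move=> p _; apply: hmu.
  split => //; rewrite /mu -mulr_suml sumrB h1 -mulr_sumr.
  rewrite (eq_bigr (fun p => (p == p0)%:R * 1)); last by move=> p _; rewrite mulr1.
  by rewrite hsum_ind mulr1 mulfV // gt_eqF.
have htz : v = (t / 2) *: p0 + (1 - t / 2) *: z.
  rewrite /z scaler_sumr.
  rewrite (eq_bigr (fun p => lam p *: p - (t / 2) *: ((p == p0)%:R *: p))); last first.
    by move=> p _; rewrite scalerA /mu scalerA mulrCA /k mulfV ?gt_eqF // mulr1 scalerBl.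
  by rewrite sumrB -scaler_sumr hvec_ind -hve addrC subrK.
have ht : 0 < t / 2 < 1 by have ht0 : 0 < t by []; apply/andP; split; lra.
have [hp0v _] := hv _ _ _ (in_conv_point (fsubsetP hPW _ p0P)) (conv_mono hPW hz) ht htz.
by move: vP; rewrite -hp0v p0P.
Qed.


Definition PV := ('cV[R]_n * R^o)%type.
Definition dd (y x : PV) : R := \sum_i y.1 i 0 * x.1 i 0 + y.2 * x.2.

Lemma dd_l a (y z x : PV) : dd (a *: y + z) x = a * dd y x + dd z x.
Proof.
rewrite /dd /=; under eq_bigr do rewrite !mxE mulrDl.
rewrite big_split /= (_ : a *: y.2 = a * y.2) //.
under eq_bigr do rewrite -mulrA.
rewrite -mulr_sumr; ring.
Qed.

Lemma dd_r a (y x z : PV) : dd y (a *: x + z) = a * dd y x + dd y z.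
Proof.
rewrite /dd /=; under eq_bigr do rewrite !mxE mulrDr.
rewrite big_split /= (_ : a *: x.2 = a * x.2) //.
under eq_bigr do rewrite mulrCA.
rewrite -mulr_sumr; ring.
Qed.

Lemma mul_self_ge0 (r : R) : 0 <= r * r.
Proof. by rewrite -expr2 sqr_ge0. Qed.

Lemma dd_base (b : PV) : b != 0 -> exists yy : PV, dd yy b < 0.
Proof.
move=> hb; exists (- b); rewrite /dd /=.
have hs : 0 <= \sum_i b.1 i 0 * b.1 i 0 by apply: sumr_ge0 => i _; apply: mul_self_ge0.
have h2 : 0 <= b.2 * b.2 by apply: mul_self_ge0.
under eq_bigr do rewrite mxE mulNr.
rewrite sumrN (_ : - b.2 * b.2 = - (b.2 * b.2)) ?mulNr // -opprD oppr_lt0.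
case: (b.2 =P 0) => [e2|/eqP n2]; last first.
  have : 0 < b.2 * b.2 by rewrite lt_def mulf_neq0 //= h2.
  lra.
suff : 0 < \sum_i b.1 i 0 * b.1 i 0 by lra.
case: (pickP (fun i : 'I_n => b.1 i 0 != 0)) => [i hi|hall].
  rewrite (bigD1 i) //=.
  have : 0 <= \sum_(j | j != i) b.1 j 0 * b.1 j 0 by apply: sumr_ge0 => j _; apply: mul_self_ge0.
  have : 0 < b.1 i 0 * b.1 i 0 by rewrite lt_def mulf_neq0 //= mul_self_ge0.
  lra.
exfalso; move: hb; case: b hall e2 hs h2 => b1 b2 /= hall -> _ _.
suff -> : b1 = 0 by rewrite eqxx.
apply/matrixP => i j; rewrite (ord1 j) mxE; by move: (hall i) => /negbFE /eqP.
Qed.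


Definition hh (p : 'cV[R]_n) : PV := (p, 1).

Lemma incone_weights (P : seq 'cV[R]_n) (x : PV) : uniq P -> incone (map hh P) x ->
  exists lam : 'cV[R]_n -> R, (forall p, 0 <= lam p) /\ x = \sum_(p <- P) lam p *: hh p.
Proof.
elim: P x => [|p P IH] x /=.
  by move=> _ ->; exists (fun _ => 0); rewrite big_nil.
move=> /andP [pP uP] [c [hc hi]].
have [lam [h0 hx]] := IH _ uP hi.
exists (fun q => if q == p then c else lam q); split.
  by move=> q; case: ifP.
rewrite big_cons eqxx -[x](subrK (c *: hh p)) hx addrC; congr (_ + _).
rewrite big_seq [RHS]big_seq; apply: eq_bigr => q hq.
case: (q =P p) => [eqp|//]; by rewrite -eqp hq in pP.
Qed.

Lemma sum_fst (P : seq 'cV[R]_n) (F : 'cV[R]_n -> PV) :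
  (\sum_(p <- P) F p).1 = \sum_(p <- P) (F p).1.
Proof. by elim: P => [|p P IH]; rewrite ?big_nil ?big_cons //= IH. Qed.

Lemma sum_snd (P : seq 'cV[R]_n) (F : 'cV[R]_n -> PV) :
  (\sum_(p <- P) F p).2 = \sum_(p <- P) (F p).2.
Proof. by elim: P => [|p P IH]; rewrite ?big_nil ?big_cons //= IH. Qed.

Lemma separate (W P : {fset 'cV[R]_n}) v : is_vertex W v -> (P `<=` W)%fset -> v \notin P ->
  exists yy : PV, (forall p, p \in P -> 0 <= dd yy (hh p)) /\ dd yy (hh v) < 0.
Proof.
move=> hv hPW vP.
have hn : ~ incone (map hh P) (hh v).
  move=> /(incone_weights (fset_uniq P)) [lam [h0 hx]].
  apply: (vertex_not_conv hv hPW vP h0).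
    have := congr1 snd hx; rewrite sum_snd /= => ->.
    by apply: eq_bigr => p _; rewrite /hh /= -[RHS]/(lam p * 1) mulr1.
  by have := congr1 fst hx; rewrite sum_fst /=.
have [yy [h1 h2]] := farkas dd_l dd_r dd_base (erefl (size (map hh P))) hn.
exists yy; split => // p hp; apply: h1; exact: map_f.
Qed.

End Conv.

Local Open Scope fset_scope.

Theorem theorem1 (R : realType) (ns na q : nat)
  (A : 'M[R]_ns) (B : 'M[R]_(ns, na)) (b : 'cV[R]_ns) (hq : (1 <= q)%N)
  (D Dbar : {fset transition R ns na})
  (hsub : Dbar `<=` D)
  (hvert : forall t, t \in Dbar -> is_vertex (Wset A B b D) (noise A B b t))
  (hcover : forall v, is_vertex (Wset A B b D) v ->
              exists2 t, t \in Dbar & noise A B b t = v)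
  (hinj : {in Dbar &, injective (noise A B b)}) :
  optimal_compression q A B b D Dbar.
Proof.
have WDbar : Wset A B b Dbar `<=` Wset A B b D.
  apply/fsubsetP => w /imfsetP [t /= ht ->]; apply: in_imfset; exact: (fsubsetP hsub).
split => //; split.
  move=> th; split.
    move=> hS w hw i.
    have [x xW [hle hvx]] := exists_vertex (row i th.1) hw.
    have [t ht ex] := hcover x hvx.
    have hx : x \in Wset A B b Dbar by rewrite -ex; apply: in_imfset.
    apply: le_trans (hS x hx i).
    by move: hle; rewrite /f -!row_mul !mxE.
  by move=> hS w hw; apply: hS; exact: (fsubsetP WDbar).
move=> Dh hDh hS.
have WDh : Wset A B b Dh `<=` Wset A B b D.
  apply/fsubsetP => w /imfsetP [t /= ht ->]; apply: in_imfset; exact: (fsubsetP hDh).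
have key : Wset A B b Dbar `<=` Wset A B b Dh.
  apply/fsubsetP => w /imfsetP [t /= ht ->].
  case: (boolP (noise A B b t \in Wset A B b Dh)) => // hn.
  have [yy [h1 h2]] := separate (hvert t ht) WDh hn.
  pose th : 'M[R]_(q, ns) * 'cV[R]_q := (\matrix_(i, j) - yy.1 j 0, \col_(i < q) yy.2).
  have hM : forall (x : 'cV[R]_ns) (k : 'I_q), (th.1 *m x) k 0 = - \sum_j yy.1 j 0 * x j 0.
    move=> x k; rewrite /th /= mxE -sumrN; apply: eq_bigr => j _; by rewrite mxE mulNr.
  have hth : in_S A B b Dh th.
    move=> ww hw i; rewrite hM /th /= mxE.
    have := h1 ww hw; rewrite /dd /hh /= -[_.2 * 1]/(yy.2 * 1) mulr1.
    move=> hh1; lra.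
  have := (proj1 (hS th) hth) (noise A B b t) (fsubsetP WDbar _ (in_imfset _ _ ht)) (Ordinal hq).
  rewrite hM /th /= mxE.
  move: h2; rewrite /dd /hh /= -[_.2 * 1]/(yy.2 * 1) mulr1 => h2 h3.
  lra.
have e1 : #|` Wset A B b Dbar| = #|` Dbar| by rewrite /Wset card_in_imfset.
rewrite -e1; apply: leq_trans (fsubset_leq_card key) _.
by rewrite /Wset leq_imfset_card.
Qed.
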